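(* Let $0<\delta\le1$ and let $t$ be a time with $\omega(t)>0$ at which the stability conditions $|\upsilon(t)/\omega(t)|\le\delta$ and $|\eta^{(n-1)}(t)/\omega^n(t)|\le\delta^n$ for $n=2,3$ hold (with $x_+$ three times continuously differentiable and nonvanishing near $t$). Let $(w_k)_{k\ge0}$ be complex numbers (the values $w_k=\widetilde\Psi_k(\omega_\psi)$) with $w_0=1$, $w_1=0$, and satisfying the wavelet suitability criteria $|w_k|\le k!\,\delta^{-k/2}$ for even $k\ge2$ and $|w_k|\le k!\,\delta^{-(k-1)/2}$ for odd $k\ge3$. For real $z$ define \[ F(z)=\sum_{m=0}^{\infty}\sum_{n=0}^{3}\sum_{p=0}^{n}\frac{(-i)^n}{(n-p)!\,p!\,m!}\,w^*_{m+n}\,\widetilde\rho_n(t)\,z^{m+p}. \] Then for every $C>0$ there is a constant $K$ depending only on $C$ such that, whenever $C\delta^{3/2}\le\frac12$ and $|z|\le C\delta^2$, the series $F(z)$ converges absolutely and \[ F(z)-F(0)=-iz\,\widetilde\rho_1(t)\,w_2^*-z\Big[\widetilde\rho_2(t)\Big(w_2^*+\tfrac12w_3^*\Big)-\tfrac{i}{6}\widetilde\rho_3(t)\,w_4^*\Big]+\tfrac12z^2w_2^*+E(z),\qquad |E(z)|\le K\delta^4. \] Here the first term is $O(\delta^2)$ and the bracketed and $z^2$ terms are $O(\delta^3)$.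
   Context: $\upsilon,\omega$ are the instantaneous bandwidth and frequency of the analytic signal $x_+$ ($\upsilon=\Re\frac{d}{dt}\ln x_+$, $\omega=\Im\frac{d}{dt}\ln x_+$), $\eta=\omega-i\upsilon$, and $\widetilde\rho_n(t)=\frac{1}{\omega^n(t)x_+(t)}\frac{d^n}{d\tau^n}[x_+(t+\tau)e^{-i\omega(t)\tau}]|_{\tau=0}$, $\widetilde\rho_0=1$. For an analytic wavelet with peak frequency $\omega_\psi$ and $\Psi(\omega_\psi)=2$, $\widetilde\Psi_k(\omega)=\omega^k\Psi^{(k)}(\omega)/\Psi(\omega)$. In the paper's notation, with $z=\Delta\omega(t,s)=s\omega(t)/\omega_\psi-1$, $F(z)$ is the main part of $W_\psi(t,s)/x_+(t)$ in the scale deviation expansion truncated at $N=3$, $F(0)-1$ is the (truncated) scale-independent perturbation $\Delta x_\psi(t)$ (the relative deviation of the localized analytic signal $W_\psi(t,\omega_\psi/\omega(t))$ from $x_+(t)$), and $F(z)-F(0)$ is the scale-dependent perturbation $\Delta W_\psi(t,s)$ apart from the transform residual; the condition $|z|\le C\delta^2$ expresses that $(t,s)$ lies in the instantaneous frequency 2-neighborhood. *)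

(* Defs.v *)
From Stdlib Require Import Reals Lra Factorial.
Open Scope R_scope.

Record Cx := mkC { re : R ; im : R }.

Definition Czero : Cx := mkC 0 0.
Definition Cone : Cx := mkC 1 0.
Definition Ci : Cx := mkC 0 1.
Definition RtoC (a : R) : Cx := mkC a 0.
Definition Cadd (a b : Cx) : Cx := mkC (re a + re b) (im a + im b).
Definition Copp (a : Cx) : Cx := mkC (- re a) (- im a).
Definition Csub (a b : Cx) : Cx := Cadd a (Copp b).
Definition Cmul (a b : Cx) : Cx :=
  mkC (re a * re b - im a * im b) (re a * im b + im a * re b).
Definition Cconj (a : Cx) : Cx := mkC (re a) (- im a).
Definition Cnorm (a : Cx) : R := sqrt (re a * re a + im a * im a).
Definition Cinv (a : Cx) : Cx :=
  let d := re a * re a + im a * im a in mkC (re a / d) (- im a / d).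
Definition Cdiv (a b : Cx) : Cx := Cmul a (Cinv b).
Fixpoint Cpow (a : Cx) (n : nat) : Cx :=
  match n with O => Cone | S k => Cmul a (Cpow a k) end.
Definition Cexpi (th : R) : Cx := mkC (cos th) (sin th).

Fixpoint Csum_upto (f : nat -> Cx) (n : nat) : Cx :=
  match n with O => f O | S k => Cadd (Csum_upto f k) (f (S k)) end.

Definition Cinfinite_sum (a : nat -> Cx) (l : Cx) : Prop :=
  infinite_sum (fun m => re (a m)) (re l) /\ infinite_sum (fun m => im (a m)) (im l).

Definition Cderiv_at (f f' : R -> Cx) (s : R) : Prop :=
  derivable_pt_lim (fun u => re (f u)) s (re (f' s)) /\
  derivable_pt_lim (fun u => im (f u)) s (im (f' s)).

Definition Ccont_at (f : R -> Cx) (s : R) : Prop :=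
  continuity_pt (fun u => re (f u)) s /\ continuity_pt (fun u => im (f u)) s.

(* d/dt ln x_+ = x_+' / x_+ ;  upsilon = Re, omega = Im, eta = omega - i upsilon *)
Definition logder (x x1 : R -> Cx) (s : R) : Cx := Cdiv (x1 s) (x s).
Definition upsilon (x x1 : R -> Cx) (s : R) : R := re (logder x x1 s).
Definition omega (x x1 : R -> Cx) (s : R) : R := im (logder x x1 s).
Definition eta (x x1 : R -> Cx) (s : R) : Cx :=
  mkC (omega x x1 s) (- upsilon x x1 s).

Definition loc_sig (x x1 : R -> Cx) (t : R) (tau : R) : Cx :=
  Cmul (x (t + tau)) (Cexpi (- (omega x x1 t * tau))).

(* rho~_n(t) from the n-th tau-derivative value g_n(0) *)
Definition rho_of (x x1 : R -> Cx) (t : R) (n : nat) (gn0 : Cx) : Cx :=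
  Cdiv gn0 (Cmul (RtoC (omega x x1 t ^ n)) (x t)).

Definition rho_seq (r1 r2 r3 : Cx) (n : nat) : Cx :=
  match n with O => Cone | 1%nat => r1 | 2%nat => r2 | _ => r3 end.

Definition Fterm (w : nat -> Cx) (r1 r2 r3 : Cx) (z : R) (m n p : nat) : Cx :=
  Cmul (Cmul (Cmul (Cpow (Copp Ci) n)
                   (RtoC (/ (INR (fact (n - p)) * INR (fact p) * INR (fact m)))))
             (Cmul (Cconj (w (m + n)%nat)) (rho_seq r1 r2 r3 n)))
       (RtoC (z ^ (m + p))).

Definition Finner (w : nat -> Cx) (r1 r2 r3 : Cx) (z : R) (m : nat) : Cx :=
  Csum_upto (fun n => Csum_upto (fun p => Fterm w r1 r2 r3 z m n p) n) 3.

Definition Finner_abs (w : nat -> Cx) (r1 r2 r3 : Cx) (z : R) (m : nat) : R :=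
  sum_f_R0 (fun n => sum_f_R0 (fun p => Cnorm (Fterm w r1 r2 r3 z m n p)) n) 3.

Definition Fmain (w : nat -> Cx) (r1 r2 r3 : Cx) (z : R) : Cx :=
  Cadd (Cadd
    (Cmul (Cmul (Cmul (Copp Ci) (RtoC z)) r1) (Cconj (w 2%nat)))
    (Copp (Cmul (RtoC z)
       (Csub (Cmul r2 (Cadd (Cconj (w 2%nat)) (Cmul (RtoC (1/2)) (Cconj (w 3%nat)))))
             (Cmul (Cmul (Cmul Ci (RtoC (1/6))) r3) (Cconj (w 4%nat)))))))
    (Cmul (RtoC (1/2 * z ^ 2)) (Cconj (w 2%nat))).

(* Main.v *)
Require Import Defs.
From Stdlib Require Import Reals Factorial Arith Lra Lia Psatz List.
Open Scope R_scope.

Lemma Cx_eq : forall a b : Cx, re a = re b -> im a = im b -> a = b.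
Proof. intros [a1 a2] [b1 b2]; simpl; intros -> ->; reflexivity. Qed.

Lemma Cnorm_ge0 a : 0 <= Cnorm a.
Proof. unfold Cnorm; apply sqrt_pos. Qed.

Lemma Cnorm_sq a : Cnorm a * Cnorm a = re a * re a + im a * im a.
Proof. unfold Cnorm; apply sqrt_sqrt; nra. Qed.

Lemma Cnorm_le_sq a b : 0 <= b -> re a * re a + im a * im a <= b * b -> Cnorm a <= b.
Proof. intros Hb H. pose proof (Cnorm_ge0 a). pose proof (Cnorm_sq a). nra. Qed.

Lemma re_le a : Rabs (re a) <= Cnorm a.
Proof. pose proof (Cnorm_ge0 a); pose proof (Cnorm_sq a).
 apply Rabs_le; split; nra. Qed.
Lemma im_le a : Rabs (im a) <= Cnorm a.
Proof. pose proof (Cnorm_ge0 a); pose proof (Cnorm_sq a).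
 apply Rabs_le; split; nra. Qed.

Lemma Cnorm_le_reim a : Cnorm a <= Rabs (re a) + Rabs (im a).
Proof. apply Cnorm_le_sq. pose proof (Rabs_pos (re a)); pose proof (Rabs_pos (im a)); lra.
 assert (re a * re a = Rabs (re a) * Rabs (re a)) by (rewrite <- Rabs_mult; rewrite Rabs_pos_eq; nra).
 assert (im a * im a = Rabs (im a) * Rabs (im a)) by (rewrite <- Rabs_mult; rewrite Rabs_pos_eq; nra).
 pose proof (Rabs_pos (re a)); pose proof (Rabs_pos (im a)). nra. Qed.

Lemma Cnorm_add a b : Cnorm (Cadd a b) <= Cnorm a + Cnorm b.
Proof. apply Cnorm_le_sq. pose proof (Cnorm_ge0 a); pose proof (Cnorm_ge0 b); lra.
 simpl. pose proof (Cnorm_ge0 a); pose proof (Cnorm_ge0 b).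
 pose proof (Cnorm_sq a); pose proof (Cnorm_sq b).
 assert (re a * re b + im a * im b <= Cnorm a * Cnorm b).
 { assert (Hs : (re a * re b + im a * im b) * (re a * re b + im a * im b) <= (Cnorm a * Cnorm b) * (Cnorm a * Cnorm b)).
   { replace (Cnorm a * Cnorm b * (Cnorm a * Cnorm b)) with ((Cnorm a * Cnorm a) * (Cnorm b * Cnorm b)) by ring.
     rewrite H1, H2. pose proof (Rle_0_sqr (re a * im b - im a * re b)); unfold Rsqr in *; nra. }
   destruct (Rle_dec (re a * re b + im a * im b) (Cnorm a * Cnorm b)) as [|Hn]; auto.
   apply Rnot_le_lt in Hn. assert (0 <= Cnorm a * Cnorm b) by nra. nra. }
 nra. Qed.

Lemma Cnorm_mul a b : Cnorm (Cmul a b) = Cnorm a * Cnorm b.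
Proof. unfold Cnorm. rewrite <- sqrt_mult by nra. f_equal. simpl. ring. Qed.

Lemma Cnorm_opp a : Cnorm (Copp a) = Cnorm a.
Proof. unfold Cnorm; simpl; f_equal; ring. Qed.
Lemma Cnorm_conj a : Cnorm (Cconj a) = Cnorm a.
Proof. unfold Cnorm; simpl; f_equal; ring. Qed.
Lemma Cnorm_RtoC r : Cnorm (RtoC r) = Rabs r.
Proof. unfold Cnorm; simpl. replace (r*r+0*0) with (r*r) by ring. apply sqrt_Rsqr_abs. Qed.
Lemma Cnorm_Cone : Cnorm Cone = 1.
Proof. unfold Cnorm; simpl. replace (1*1+0*0) with 1 by ring. apply sqrt_1. Qed.
Lemma Cnorm_Czero : Cnorm Czero = 0.
Proof. unfold Cnorm; simpl. replace (0*0+0*0) with 0 by ring. apply sqrt_0. Qed.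
Lemma Cnorm_Ci : Cnorm (Copp Ci) = 1.
Proof. unfold Cnorm; simpl. replace (- 0 * - 0 + - (1) * - (1)) with 1 by ring. apply sqrt_1. Qed.
Lemma Cnorm_pow a n : Cnorm (Cpow a n) = Cnorm a ^ n.
Proof. induction n; simpl. apply Cnorm_Cone. rewrite Cnorm_mul, IHn; ring. Qed.

Lemma dpl_eq f x l l' : derivable_pt_lim f x l -> l = l' -> derivable_pt_lim f x l'.
Proof. intros H ->; exact H. Qed.

Lemma dpl_local f g x l :
  (exists r, 0 < r /\ forall u, Rabs (u - x) < r -> f u = g u) ->
  derivable_pt_lim f x l -> derivable_pt_lim g x l.
Proof.
  intros [r [Hr Heq]] H eps Heps.
  destruct (H eps Heps) as [d Hd].
  assert (Hm : 0 < Rmin d r) by (apply Rmin_pos; [apply cond_pos | lra]).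
  exists (mkposreal _ Hm). intros h Hh Hlt. simpl in Hlt.
  rewrite <- !Heq.
  - apply Hd; auto. eapply Rlt_le_trans; [exact Hlt|apply Rmin_l].
  - rewrite Rminus_diag, Rabs_R0; lra.
  - replace (x + h - x) with h by ring. eapply Rlt_le_trans; [exact Hlt|apply Rmin_r].
Qed.

Lemma Cderiv_unique f f1 f2 s : Cderiv_at f f1 s -> Cderiv_at f f2 s -> f1 s = f2 s.
Proof.
  intros [H1 H2] [H3 H4].
  apply (f_equal2 mkC (uniqueness_limite _ _ _ _ H1 H3) (uniqueness_limite _ _ _ _ H2 H4)) ||
  (destruct (f1 s), (f2 s); simpl in *; f_equal; eapply uniqueness_limite; eauto).
Qed.

Lemma Cderiv_local f g h s :
  (exists r, 0 < r /\ forall u, Rabs (u - s) < r -> f u = g u) ->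
  Cderiv_at f h s -> Cderiv_at g h s.
Proof.
  intros [r [Hr Heq]] [H1 H2]; split.
  - eapply dpl_local; [|exact H1]. exists r; split; auto; intros; rewrite Heq; auto.
  - eapply dpl_local; [|exact H2]. exists r; split; auto; intros; rewrite Heq; auto.
Qed.

Lemma Cderiv_add f f' g g' s : Cderiv_at f f' s -> Cderiv_at g g' s ->
  Cderiv_at (fun u => Cadd (f u) (g u)) (fun u => Cadd (f' u) (g' u)) s.
Proof.
  intros [H1 H2] [H3 H4]; split; simpl.
  - apply (derivable_pt_lim_plus (fun u => re (f u)) (fun u => re (g u))); auto.
  - apply (derivable_pt_lim_plus (fun u => im (f u)) (fun u => im (g u))); auto.
Qed.

Lemma Cderiv_mul f f' g g' s : Cderiv_at f f' s -> Cderiv_at g g' s ->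
  Cderiv_at (fun u => Cmul (f u) (g u))
            (fun u => Cadd (Cmul (f' u) (g u)) (Cmul (f u) (g' u))) s.
Proof.
  intros [H1 H2] [H3 H4]; split; simpl.
  - eapply dpl_eq.
    apply (derivable_pt_lim_minus (fun u => re (f u) * re (g u)) (fun u => im (f u) * im (g u)));
    apply (derivable_pt_lim_mult (fun u => _ (f u)) (fun u => _ (g u))); eauto.
    simpl; ring.
  - eapply dpl_eq.
    apply (derivable_pt_lim_plus (fun u => re (f u) * im (g u)) (fun u => im (f u) * re (g u)));
    apply (derivable_pt_lim_mult (fun u => _ (f u)) (fun u => _ (g u))); eauto.
    simpl; ring.
Qed.

Lemma Cderiv_const c s : Cderiv_at (fun _ => c) (fun _ => Czero) s.
Proof. split; simpl; apply (derivable_pt_lim_const). Qed.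

Lemma Cderiv_shift f f' t s : Cderiv_at f f' (t + s) ->
  Cderiv_at (fun u => f (t + u)) (fun u => f' (t + u)) s.
Proof.
  intros [H1 H2]; split.
  - eapply dpl_eq.
    apply (derivable_pt_lim_comp (fun u => t + u) (fun v => re (f v))).
    eapply dpl_eq. apply (derivable_pt_lim_plus (fun _ => t) (fun u => u)).
    apply derivable_pt_lim_const. apply derivable_pt_lim_id. reflexivity. exact H1. ring.
  - eapply dpl_eq.
    apply (derivable_pt_lim_comp (fun u => t + u) (fun v => im (f v))).
    eapply dpl_eq. apply (derivable_pt_lim_plus (fun _ => t) (fun u => u)).
    apply derivable_pt_lim_const. apply derivable_pt_lim_id. reflexivity. exact H2. ring.
Qed.

Lemma dpl_lin w s : derivable_pt_lim (fun u => - (w * u)) s (- w).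
Proof.
  eapply dpl_eq. apply (derivable_pt_lim_opp (fun u => w * u)).
  eapply dpl_eq. apply (derivable_pt_lim_scal (fun u => u)). apply derivable_pt_lim_id.
  reflexivity. ring.
Qed.

Lemma Cderiv_expi w s :
  Cderiv_at (fun u => Cexpi (- (w * u))) (fun u => Cmul (mkC 0 (- w)) (Cexpi (- (w * u)))) s.
Proof.
  split; simpl.
  - eapply dpl_eq. apply (derivable_pt_lim_comp (fun u => - (w * u)) cos).
    apply dpl_lin. apply derivable_pt_lim_cos. ring.
  - eapply dpl_eq. apply (derivable_pt_lim_comp (fun u => - (w * u)) sin).
    apply dpl_lin. apply derivable_pt_lim_sin. ring.
Qed.

Definition Lf (x x1 : R -> Cx) s := Cmul Ci (eta x x1 s).
Definition L1f (x x1 e1 : R -> Cx) s := Cadd (Cmul Czero (eta x x1 s)) (Cmul Ci (e1 s)).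
Definition L2f (x x1 e1 e2 : R -> Cx) s :=
  Cadd (Cadd (Cmul Czero (eta x x1 s)) (Cmul Czero (e1 s)))
       (Cadd (Cmul Czero (e1 s)) (Cmul Ci (e2 s))).

Lemma Cderiv_Lf x x1 e1 s : Cderiv_at (eta x x1) e1 s -> Cderiv_at (Lf x x1) (L1f x x1 e1) s.
Proof. intros H. unfold Lf, L1f.
  apply (Cderiv_mul (fun _ => Ci) (fun _ => Czero) (eta x x1) e1 s); auto. apply Cderiv_const. Qed.

Lemma Cderiv_L1f x x1 e1 e2 s : Cderiv_at (eta x x1) e1 s -> Cderiv_at e1 e2 s ->
  Cderiv_at (L1f x x1 e1) (L2f x x1 e1 e2) s.
Proof. intros H H2. unfold L1f, L2f.
  apply (Cderiv_add (fun u => Cmul Czero (eta x x1 u)) _ (fun u => Cmul Ci (e1 u))).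
  apply (Cderiv_mul (fun _ => Czero) (fun _ => Czero) (eta x x1) e1 s); auto. apply Cderiv_const.
  apply (Cderiv_mul (fun _ => Ci) (fun _ => Czero) e1 e2 s); auto. apply Cderiv_const. Qed.

Lemma x1_eq x x1 s : x s <> Czero -> x1 s = Cmul (x s) (Lf x x1 s).
Proof.
  intros Hx. assert (Hd : re (x s) * re (x s) + im (x s) * im (x s) <> 0).
  { intro H0. apply Hx. apply Cx_eq; simpl; nra. }
  unfold Lf, eta, omega, upsilon, logder, Cdiv, Cinv, Ci, Cmul. apply Cx_eq; simpl; field; auto.
Qed.


Definition Ef (x x1 : R -> Cx) (t : R) := fun u => Cexpi (- (omega x x1 t * u)).
Definition kk (x x1 : R -> Cx) (t : R) := mkC 0 (- omega x x1 t).
Definition E1f x x1 t := fun u => Cmul (kk x x1 t) (Ef x x1 t u).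
Definition E2f x x1 t := fun u => Cadd (Cmul Czero (Ef x x1 t u)) (Cmul (kk x x1 t) (E1f x x1 t u)).
Definition E3f x x1 t := fun u => Cadd (Cadd (Cmul Czero (Ef x x1 t u)) (Cmul Czero (E1f x x1 t u)))
                                (Cadd (Cmul Czero (E1f x x1 t u)) (Cmul (kk x x1 t) (E2f x x1 t u))).
Definition G1f (x x1 : R -> Cx) t := fun u =>
  Cadd (Cmul (x1 (t + u)) (Ef x x1 t u)) (Cmul (x (t + u)) (E1f x x1 t u)).
Definition G2f (x x1 x2 : R -> Cx) t := fun u =>
  Cadd (Cadd (Cmul (x2 (t + u)) (Ef x x1 t u)) (Cmul (x1 (t + u)) (E1f x x1 t u)))
       (Cadd (Cmul (x1 (t + u)) (E1f x x1 t u)) (Cmul (x (t + u)) (E2f x x1 t u))).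
Definition G3f (x x1 x2 x3 : R -> Cx) t := fun u =>
  Cadd (Cadd (Cadd (Cmul (x3 (t + u)) (Ef x x1 t u)) (Cmul (x2 (t + u)) (E1f x x1 t u)))
             (Cadd (Cmul (x2 (t + u)) (E1f x x1 t u)) (Cmul (x1 (t + u)) (E2f x x1 t u))))
       (Cadd (Cadd (Cmul (x2 (t + u)) (E1f x x1 t u)) (Cmul (x1 (t + u)) (E2f x x1 t u)))
             (Cadd (Cmul (x1 (t + u)) (E2f x x1 t u)) (Cmul (x (t + u)) (E3f x x1 t u)))).

Lemma dE x x1 t u : Cderiv_at (Ef x x1 t) (E1f x x1 t) u.
Proof. unfold Ef, E1f, kk. apply Cderiv_expi. Qed.
Lemma dE1 x x1 t u : Cderiv_at (E1f x x1 t) (E2f x x1 t) u.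
Proof. unfold E1f at 1, E2f. apply (Cderiv_mul (fun _ => kk x x1 t) (fun _ => Czero) (Ef x x1 t) (E1f x x1 t) u).
  apply Cderiv_const. apply dE. Qed.
Lemma dE2 x x1 t u : Cderiv_at (E2f x x1 t) (E3f x x1 t) u.
Proof. unfold E2f at 1, E3f.
  apply (Cderiv_add (fun u => Cmul Czero (Ef x x1 t u)) _ (fun u => Cmul (kk x x1 t) (E1f x x1 t u))).
  apply (Cderiv_mul (fun _ => Czero) (fun _ => Czero) (Ef x x1 t) (E1f x x1 t) u). apply Cderiv_const. apply dE.
  apply (Cderiv_mul (fun _ => kk x x1 t) (fun _ => Czero) (E1f x x1 t) (E2f x x1 t) u). apply Cderiv_const. apply dE1. Qed.

Lemma dG0 x x1 t u : Cderiv_at x x1 (t + u) ->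
  Cderiv_at (loc_sig x x1 t) (G1f x x1 t) u.
Proof. intros H. unfold loc_sig, G1f.
  apply (Cderiv_mul (fun u => x (t + u)) (fun u => x1 (t + u)) (Ef x x1 t) (E1f x x1 t) u).
  apply Cderiv_shift; auto. apply dE. Qed.

Lemma dG1 x x1 x2 t u : Cderiv_at x x1 (t + u) -> Cderiv_at x1 x2 (t + u) ->
  Cderiv_at (G1f x x1 t) (G2f x x1 x2 t) u.
Proof. intros H H1. unfold G1f, G2f.
  apply (Cderiv_add (fun u => Cmul (x1 (t + u)) (Ef x x1 t u)) _ (fun u => Cmul (x (t + u)) (E1f x x1 t u))).
  apply (Cderiv_mul (fun u => x1 (t + u)) (fun u => x2 (t + u)) (Ef x x1 t) (E1f x x1 t) u).
  apply Cderiv_shift; auto. apply dE.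
  apply (Cderiv_mul (fun u => x (t + u)) (fun u => x1 (t + u)) (E1f x x1 t) (E2f x x1 t) u).
  apply Cderiv_shift; auto. apply dE1. Qed.

Lemma dG2 x x1 x2 x3 t u : Cderiv_at x x1 (t + u) -> Cderiv_at x1 x2 (t + u) -> Cderiv_at x2 x3 (t + u) ->
  Cderiv_at (G2f x x1 x2 t) (G3f x x1 x2 x3 t) u.
Proof. intros H H1 H2. unfold G2f, G3f.
  apply (Cderiv_add (fun u => Cadd (Cmul (x2 (t + u)) (Ef x x1 t u)) (Cmul (x1 (t + u)) (E1f x x1 t u))) _
                    (fun u => Cadd (Cmul (x1 (t + u)) (E1f x x1 t u)) (Cmul (x (t + u)) (E2f x x1 t u)))).
  apply (Cderiv_add (fun u => Cmul (x2 (t + u)) (Ef x x1 t u)) _ (fun u => Cmul (x1 (t + u)) (E1f x x1 t u))).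
  apply (Cderiv_mul (fun u => x2 (t + u)) (fun u => x3 (t + u)) (Ef x x1 t) (E1f x x1 t) u).
  apply Cderiv_shift; auto. apply dE.
  apply (Cderiv_mul (fun u => x1 (t + u)) (fun u => x2 (t + u)) (E1f x x1 t) (E2f x x1 t) u).
  apply Cderiv_shift; auto. apply dE1.
  apply (Cderiv_add (fun u => Cmul (x1 (t + u)) (E1f x x1 t u)) _ (fun u => Cmul (x (t + u)) (E2f x x1 t u))).
  apply (Cderiv_mul (fun u => x1 (t + u)) (fun u => x2 (t + u)) (E1f x x1 t) (E2f x x1 t) u).
  apply Cderiv_shift; auto. apply dE1.
  apply (Cderiv_mul (fun u => x (t + u)) (fun u => x1 (t + u)) (E2f x x1 t) (E3f x x1 t) u).
  apply Cderiv_shift; auto. apply dE2. Qed.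

Lemma dXL x x1 e1 s : Cderiv_at x x1 s -> Cderiv_at (eta x x1) e1 s ->
  Cderiv_at (fun u => Cmul (x u) (Lf x x1 u)) (fun u => Cadd (Cmul (x1 u) (Lf x x1 u)) (Cmul (x u) (L1f x x1 e1 u))) s.
Proof. intros H H1. apply (Cderiv_mul x x1 (Lf x x1) (L1f x x1 e1)); auto. apply Cderiv_Lf; auto. Qed.

Lemma dX2 x x1 x2 e1 e2 t : Cderiv_at x x1 t -> Cderiv_at x1 x2 t -> Cderiv_at (eta x x1) e1 t ->
  Cderiv_at e1 e2 t ->
  Cderiv_at (fun u => Cadd (Cmul (x1 u) (Lf x x1 u)) (Cmul (x u) (L1f x x1 e1 u)))
    (fun u => Cadd (Cadd (Cmul (x2 u) (Lf x x1 u)) (Cmul (x1 u) (L1f x x1 e1 u)))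
                   (Cadd (Cmul (x1 u) (L1f x x1 e1 u)) (Cmul (x u) (L2f x x1 e1 e2 u)))) t.
Proof. intros H H1 H2 H3.
  apply (Cderiv_add (fun u => Cmul (x1 u) (Lf x x1 u)) _ (fun u => Cmul (x u) (L1f x x1 e1 u))).
  apply (Cderiv_mul x1 x2 (Lf x x1) (L1f x x1 e1)); auto. apply Cderiv_Lf; auto.
  apply (Cderiv_mul x x1 (L1f x x1 e1) (L2f x x1 e1 e2)); auto. apply Cderiv_L1f; auto. Qed.

Lemma ball_sub s t r : Rabs (s - t) < r ->
  exists r', 0 < r' /\ forall u, Rabs (u - s) < r' -> Rabs (u - t) < r.
Proof. intros H. exists (r - Rabs (s - t)). split. lra. intros u Hu.
  replace (u - t) with ((u - s) + (s - t)) by ring.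
  eapply Rle_lt_trans. apply Rabs_triang. lra. Qed.

Lemma derivs (t : R) (x x1 x2 x3 e1 e2 g1 g2 g3 : R -> Cx) :
    (exists r, 0 < r /\ forall s, Rabs (s - t) < r ->
       x s <> Czero /\ Cderiv_at x x1 s /\ Cderiv_at x1 x2 s /\
       Cderiv_at x2 x3 s /\ Ccont_at x3 s) ->
    (exists r, 0 < r /\ forall s, Rabs (s - t) < r -> Cderiv_at (eta x x1) e1 s) ->
    Cderiv_at e1 e2 t ->
    (exists r, 0 < r /\ forall tau, Rabs tau < r ->
       Cderiv_at (loc_sig x x1 t) g1 tau /\ Cderiv_at g1 g2 tau) ->
    Cderiv_at g2 g3 0 ->
    x t <> Czero /\
    x1 t = Cmul (x t) (Lf x x1 t) /\
    x2 t = Cadd (Cmul (x1 t) (Lf x x1 t)) (Cmul (x t) (L1f x x1 e1 t)) /\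
    x3 t = Cadd (Cadd (Cmul (x2 t) (Lf x x1 t)) (Cmul (x1 t) (L1f x x1 e1 t)))
                   (Cadd (Cmul (x1 t) (L1f x x1 e1 t)) (Cmul (x t) (L2f x x1 e1 e2 t))) /\
    g1 0 = G1f x x1 t 0 /\ g2 0 = G2f x x1 x2 t 0 /\ g3 0 = G3f x x1 x2 x3 t 0.
Proof.
  intros [rx [Hrx Hx]] [rr [Hre He]] He2 [rg [Hrg Hg]] Hg3.
  set (r0 := Rmin rx rr).
  assert (Hr0 : 0 < r0) by (apply Rmin_pos; lra).
  assert (Hin0 : forall s, Rabs (s - t) < r0 -> Rabs (s - t) < rx /\ Rabs (s - t) < rr).
  { intros s Hs; split; eapply Rlt_le_trans; eauto; [apply Rmin_l|apply Rmin_r]. }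
  assert (Ht0 : Rabs (t - t) < r0) by (rewrite Rminus_diag, Rabs_R0; lra).
  assert (Q1 : forall s, Rabs (s - t) < r0 ->
     x2 s = Cadd (Cmul (x1 s) (Lf x x1 s)) (Cmul (x s) (L1f x x1 e1 s))).
  { intros s Hs. destruct (Hin0 s Hs) as [Hs1 Hs2].
    destruct (Hx s Hs1) as [Hxs [Hd0 [Hd1 _]]].
    apply (Cderiv_unique x1 x2 (fun u => Cadd (Cmul (x1 u) (Lf x x1 u)) (Cmul (x u) (L1f x x1 e1 u))) s Hd1).
    apply (Cderiv_local (fun u => Cmul (x u) (Lf x x1 u))).
    - destruct (ball_sub s t r0 Hs) as [r' [Hr' Hb]]. exists r'; split; auto.
      intros u Hu. symmetry. apply x1_eq. destruct (Hin0 u (Hb u Hu)) as [Hu1 _]. apply (Hx u Hu1).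
    - apply dXL; auto. }
  destruct (Hin0 t Ht0) as [Ht1 Ht2].
  destruct (Hx t Ht1) as [Hxt [Hd0 [Hd1 [Hd2 _]]]].
  split; [exact Hxt|]. split; [apply x1_eq; exact Hxt|]. split; [apply Q1; exact Ht0|].
  split.
  { apply (Cderiv_unique x2 x3 (fun u => Cadd (Cadd (Cmul (x2 u) (Lf x x1 u)) (Cmul (x1 u) (L1f x x1 e1 u)))
                   (Cadd (Cmul (x1 u) (L1f x x1 e1 u)) (Cmul (x u) (L2f x x1 e1 e2 u)))) t Hd2).
    apply (Cderiv_local (fun u => Cadd (Cmul (x1 u) (Lf x x1 u)) (Cmul (x u) (L1f x x1 e1 u)))).
    - exists r0; split; auto. intros u Hu; symmetry; apply Q1; auto.
    - apply dX2; auto. }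
  set (r1 := Rmin rg rx).
  assert (Hr1 : 0 < r1) by (apply Rmin_pos; lra).
  assert (Hin1 : forall u, Rabs u < r1 -> Rabs u < rg /\ Rabs (t + u - t) < rx).
  { intros u Hu; split; [|replace (t + u - t) with u by ring]; eapply Rlt_le_trans; eauto; [apply Rmin_l|apply Rmin_r]. }
  assert (Hz1 : Rabs 0 < r1) by (rewrite Rabs_R0; lra).
  assert (Q3 : forall u, Rabs u < r1 -> g1 u = G1f x x1 t u).
  { intros u Hu. destruct (Hin1 u Hu) as [Hu1 Hu2].
    apply (Cderiv_unique (loc_sig x x1 t) g1 (G1f x x1 t) u (proj1 (Hg u Hu1))).
    apply dG0. apply (Hx _ Hu2). }
  assert (Q4 : forall u, Rabs u < r1 -> g2 u = G2f x x1 x2 t u).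
  { intros u Hu. destruct (Hin1 u Hu) as [Hu1 Hu2].
    apply (Cderiv_unique g1 g2 (G2f x x1 x2 t) u (proj2 (Hg u Hu1))).
    apply (Cderiv_local (G1f x x1 t)).
    - destruct (ball_sub u 0 r1) as [r' [Hr' Hb]]. rewrite Rminus_0_r; auto.
      exists r'; split; auto. intros v Hv. symmetry; apply Q3. rewrite <- (Rminus_0_r v). auto.
    - apply dG1; apply (Hx _ Hu2). }
  split. apply Q3; auto. split. apply Q4; auto.
  apply (Cderiv_unique g2 g3 (G3f x x1 x2 x3 t) 0 Hg3).
  apply (Cderiv_local (G2f x x1 x2 t)).
  - exists r1; split; auto. intros v Hv. symmetry; apply Q4. rewrite <- (Rminus_0_r v). auto.
  - destruct (Hin1 0 Hz1) as [_ H0]. apply dG2; apply (Hx _ H0).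
Qed.

Lemma Cnz a : a <> Czero -> re a * re a + im a * im a <> 0.
Proof. intros H H0. apply H. apply Cx_eq; simpl; nra. Qed.

Lemma cdiv_eq T Z G : Z <> Czero -> Cmul T Z = G -> Cdiv G Z = T.
Proof. intros HZ <-. pose proof (Cnz _ HZ). unfold Cdiv, Cinv, Cmul.
  apply Cx_eq; simpl; field; auto. Qed.

Lemma RtoCmul_nz c X : c <> 0 -> X <> Czero -> Cmul (RtoC c) X <> Czero.
Proof. intros Hc HX H. apply HX. pose proof (f_equal re H); pose proof (f_equal im H).
  simpl in *. apply Cx_eq; simpl.
  apply (Rmult_eq_reg_l c); [|auto]. lra. apply (Rmult_eq_reg_l c); [|auto]. lra. Qed.

Lemma Ef0 x x1 t : Ef x x1 t 0 = Cone.
Proof. unfold Ef, Cexpi, Cone. rewrite Rmult_0_r, Ropp_0, cos_0, sin_0. reflexivity. Qed.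

Lemma rho_ids (t : R) (x x1 x2 x3 e1 e2 g1 g2 g3 : R -> Cx) :
    0 < omega x x1 t ->
    x t <> Czero ->
    x1 t = Cmul (x t) (Lf x x1 t) ->
    x2 t = Cadd (Cmul (x1 t) (Lf x x1 t)) (Cmul (x t) (L1f x x1 e1 t)) ->
    x3 t = Cadd (Cadd (Cmul (x2 t) (Lf x x1 t)) (Cmul (x1 t) (L1f x x1 e1 t)))
                   (Cadd (Cmul (x1 t) (L1f x x1 e1 t)) (Cmul (x t) (L2f x x1 e1 e2 t))) ->
    g1 0 = G1f x x1 t 0 -> g2 0 = G2f x x1 x2 t 0 -> g3 0 = G3f x x1 x2 x3 t 0 ->
    let w := omega x x1 t in let v := upsilon x x1 t in
    rho_of x x1 t 1 (g1 0) = RtoC (v / w) /\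
    rho_of x x1 t 2 (g2 0) = Cmul (RtoC (/ w ^ 2)) (Cadd (RtoC (v ^ 2)) (Cmul Ci (e1 t))) /\
    rho_of x x1 t 3 (g3 0) = Cmul (RtoC (/ w ^ 3))
       (Cadd (Cadd (RtoC (v ^ 3)) (Cmul (RtoC (3 * v)) (Cmul Ci (e1 t)))) (Cmul Ci (e2 t))).
Proof.
  intros Hw Hx Q0 Q1 Q2 Q3 Q4 Q5 w v.
  assert (Hw0 : w <> 0) by (unfold w; lra).
  unfold rho_of. fold w.
  rewrite Q3, Q4, Q5. unfold G1f, G2f, G3f, E3f, E2f, E1f. rewrite !Rplus_0_r, Ef0.
  rewrite Q2, Q1, Q0.
  assert (HL : Lf x x1 t = mkC v w).
  { unfold Lf, eta, Ci, Cmul. fold w v. apply Cx_eq; simpl; ring. }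
  rewrite HL. unfold L2f, L1f. unfold kk. fold w.
  unfold eta. fold w v.
  destruct (x t) as [a b] eqn:Ext. destruct (e1 t) as [p q]. destruct (e2 t) as [p2 q2].
  split; [|split]; apply cdiv_eq; try (apply RtoCmul_nz; [apply pow_nonzero; auto|auto]);
  unfold Cmul, Cadd, RtoC, Ci, Cone, Czero; apply Cx_eq; simpl; field; auto.
Qed.

Lemma rho_bounds (w v delta : R) (E1 E2 : Cx) :
  0 < w -> 0 < delta ->
  Rabs (v / w) <= delta -> Cnorm E1 / w ^ 2 <= delta ^ 2 -> Cnorm E2 / w ^ 3 <= delta ^ 3 ->
  Cnorm (RtoC (v / w)) <= delta /\
  Cnorm (Cmul (RtoC (/ w ^ 2)) (Cadd (RtoC (v ^ 2)) (Cmul Ci E1))) <= 2 * delta ^ 2 /\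
  Cnorm (Cmul (RtoC (/ w ^ 3))
       (Cadd (Cadd (RtoC (v ^ 3)) (Cmul (RtoC (3 * v)) (Cmul Ci E1))) (Cmul Ci E2))) <= 5 * delta ^ 3.
Proof.
  intros Hw Hd Hv H1 H2.
  set (r := v / w) in *. assert (Hvr : v = r * w) by (unfold r; field; lra).
  assert (HCi : Cnorm Ci = 1).
  { unfold Cnorm; simpl. replace (0 * 0 + 1 * 1) with 1 by ring. apply sqrt_1. }
  assert (Hw2 : 0 < w ^ 2) by (apply pow_lt; auto).
  assert (Hw3 : 0 < w ^ 3) by (apply pow_lt; auto).
  assert (HE1 : Cnorm E1 <= delta ^ 2 * w ^ 2).
  { apply (Rmult_le_compat_r (w ^ 2)) in H1; [|lra]. unfold Rdiv in H1.
    rewrite Rmult_assoc, Rinv_l in H1 by lra. lra. }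
  assert (HE2 : Cnorm E2 <= delta ^ 3 * w ^ 3).
  { apply (Rmult_le_compat_r (w ^ 3)) in H2; [|lra]. unfold Rdiv in H2.
    rewrite Rmult_assoc, Rinv_l in H2 by lra. lra. }
  pose proof (Cnorm_ge0 E1). pose proof (Cnorm_ge0 E2).
  pose proof (Rabs_pos r).
  split; [rewrite Cnorm_RtoC; auto|split].
  - rewrite Cnorm_mul, Cnorm_RtoC, Rabs_pos_eq by (left; apply Rinv_0_lt_compat; lra).
    eapply Rle_trans. apply Rmult_le_compat_l. left; apply Rinv_0_lt_compat; lra. apply Cnorm_add.
    rewrite Cnorm_RtoC, Cnorm_mul, HCi, Hvr.
    rewrite Rabs_pos_eq by (apply pow2_ge_0 || nra).
    apply (Rmult_le_reg_l (w ^ 2)); auto. rewrite <- Rmult_assoc, Rinv_r, Rmult_1_l by lra.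
    assert ((r * w) ^ 2 <= delta ^ 2 * w ^ 2).
    { rewrite Rpow_mult_distr. apply Rmult_le_compat_r. lra.
      replace (r ^ 2) with (Rabs r ^ 2) by (rewrite RPow_abs; apply Rabs_pos_eq; apply pow2_ge_0). apply pow_incr; lra. }
    nra.
  - rewrite Cnorm_mul, Cnorm_RtoC, Rabs_pos_eq by (left; apply Rinv_0_lt_compat; lra).
    eapply Rle_trans. apply Rmult_le_compat_l. left; apply Rinv_0_lt_compat; lra.
    eapply Rle_trans. apply Cnorm_add. apply Rplus_le_compat_r. apply Cnorm_add.
    rewrite !Cnorm_RtoC, !Cnorm_mul, HCi, !Cnorm_RtoC, Hvr.
    apply (Rmult_le_reg_l (w ^ 3)); auto. rewrite <- Rmult_assoc, Rinv_r, Rmult_1_l by lra.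
    rewrite <- RPow_abs, !Rabs_mult, Rpow_mult_distr, (Rabs_pos_eq w) by lra.
    assert (Rabs r ^ 3 <= delta ^ 3) by (apply pow_incr; lra).
    replace (Rabs 3) with 3 by (rewrite Rabs_pos_eq; lra).
    assert (0 <= Rabs r ^ 3) by (apply pow_le; lra).
    assert (Hw3' : w ^ 3 = w * w ^ 2) by ring.
    assert (3 * (Rabs r * w) * (1 * Cnorm E1) <= 3 * delta ^ 3 * w ^ 3).
    { rewrite Hw3'. assert (0 <= Rabs r * w) by nra.
      apply Rle_trans with (3 * (delta * w) * (delta ^ 2 * w ^ 2)).
      apply Rmult_le_compat. nra. nra. nra. lra. nra. }
    nra.
Qed.

Lemma absle x y : Rabs x <= y -> - y <= x <= y.
Proof. intros H. pose proof (Rle_abs x). pose proof (Rle_abs (- x)). rewrite Rabs_Ropp in H1. lra. Qed.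

Lemma isum_cv a l : infinite_sum a l <-> Un_cv (sum_f_R0 a) l.
Proof. split; intro H; exact H. Qed.

Lemma partial_B (B : nat -> R) c r :
  0 <= r < 1 -> (forall k, B (k + 3)%nat <= c * r ^ k) ->
  forall N, sum_f_R0 B (N + 2) <= sum_f_R0 B 2 + c / (1 - r) * (1 - r ^ N).
Proof.
  intros Hr HB. induction N.
  - simpl. replace (1 - 1) with 0 by ring. lra.
  - replace (S N + 2)%nat with (S (N + 2)) by lia. simpl sum_f_R0 at 1.
    replace (S (N + 2)) with (N + 3)%nat by lia.
    pose proof (HB N). simpl pow.
    replace (c / (1 - r) * (1 - r * r ^ N)) with (c / (1 - r) * (1 - r ^ N) + c * r ^ N)
      by (field; lra). lra.
Qed.

Lemma partial_a (a B : nat -> R) c r :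
  0 <= r < 1 -> (forall m, Rabs (a m) <= B m) -> (forall k, B (k + 3)%nat <= c * r ^ k) ->
  forall N, Rabs (sum_f_R0 a (N + 2) - sum_f_R0 a 2) <= c / (1 - r) * (1 - r ^ N).
Proof.
  intros Hr Ha HB. induction N.
  - simpl. replace (1 - 1) with 0 by ring. rewrite Rminus_diag, Rabs_R0. lra.
  - replace (S N + 2)%nat with (S (N + 2)) by lia. simpl sum_f_R0 at 1.
    replace (S (N + 2)) with (N + 3)%nat by lia.
    pose proof (HB N). pose proof (Ha (N + 3)%nat). simpl pow.
    replace (c / (1 - r) * (1 - r * r ^ N)) with (c / (1 - r) * (1 - r ^ N) + c * r ^ N)
      by (field; lra).
    replace (sum_f_R0 a (N + 2) + a (N + 3)%nat - sum_f_R0 a 2)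
      with ((sum_f_R0 a (N + 2) - sum_f_R0 a 2) + a (N + 3)%nat) by ring.
    eapply Rle_trans. apply Rabs_triang. lra.
Qed.

Lemma sum_growing (B : nat -> R) : (forall m, 0 <= B m) -> Un_growing (sum_f_R0 B).
Proof. intros H n. simpl. pose proof (H (S n)). lra. Qed.

Lemma sum_le_mono (B : nat -> R) : (forall m, 0 <= B m) -> forall n N, (n <= N)%nat ->
  sum_f_R0 B n <= sum_f_R0 B N.
Proof. intros H n N HnN. induction HnN. lra. simpl. pose proof (H (S m)). lra. Qed.

Lemma cv_nonneg (B : nat -> R) M : (forall m, 0 <= B m) ->
  (forall N, sum_f_R0 B (N + 2) <= M) -> exists l, infinite_sum B l.
Proof.
  intros H HM. destruct (growing_cv (sum_f_R0 B)) as [l Hl].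
  - apply sum_growing; auto.
  - exists M. intros y [n ->]. eapply Rle_trans. apply (sum_le_mono B H n (n + 2)). lia. apply HM.
  - exists l. exact Hl.
Qed.

Lemma cv_dom (a B : nat -> R) M : (forall m, Rabs (a m) <= B m) ->
  (forall N, sum_f_R0 B (N + 2) <= M) -> exists l, infinite_sum a l.
Proof.
  intros Ha HM.
  assert (HB0 : forall m, 0 <= B m) by (intro m; eapply Rle_trans; [apply Rabs_pos|apply Ha]).
  destruct (cv_nonneg B M HB0 HM) as [lB HlB].
  destruct (cv_nonneg (fun m => a m + B m) (2 * M)) as [lS HlS].
  - intro m. pose proof (Ha m). apply absle in H. lra.
  - intro N. rewrite (plus_sum a B). pose proof (HM N).
    assert (sum_f_R0 a (N + 2) <= sum_f_R0 B (N + 2)).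
    { apply sum_Rle. intros n _. pose proof (Ha n). apply absle in H0. lra. }
    lra.
  - exists (lS - lB). apply isum_cv.
    assert (Hc := CV_minus _ _ _ _ HlS HlB).
    intros eps Heps. destruct (Hc eps Heps) as [N HN]. exists N. intros n Hn.
    specialize (HN n Hn). rewrite <- minus_sum in HN.
    replace (sum_f_R0 a n) with (sum_f_R0 (fun i => a i + B i - B i) n). exact HN.
    apply sum_eq. intros; ring.
Qed.

Lemma lim_bound (u : nat -> R) l S M : Un_cv u l ->
  (forall N, Rabs (u (N + 2)%nat - S) <= M) -> Rabs (l - S) <= M.
Proof.
  intros Hu HM. destruct (Rle_dec (Rabs (l - S)) M) as [|Hn]; auto. exfalso.
  apply Rnot_le_lt in Hn. set (eps := Rabs (l - S) - M).
  assert (He : eps > 0) by (unfold eps; lra).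
  destruct (Hu eps He) as [N HN]. specialize (HN (N + 2)%nat ltac:(lia)). specialize (HM N).
  unfold Rdist in HN.
  assert (Rabs (l - S) <= Rabs (u (N + 2)%nat - l) + Rabs (u (N + 2)%nat - S)).
  { replace (l - S) with (- (u (N + 2)%nat - l) + (u (N + 2)%nat - S)) by ring.
    eapply Rle_trans. apply Rabs_triang. rewrite Rabs_Ropp. lra. }
  unfold eps in HN. lra.
Qed.

Lemma INR_fact_ge1 n : 1 <= INR (fact n).
Proof. apply (le_INR 1). pose proof (lt_O_fact n). lia. Qed.

Lemma Fterm_norm w r1 r2 r3 z m n p :
  Cnorm (Fterm w r1 r2 r3 z m n p) =
  / (INR (fact (n - p)) * INR (fact p) * INR (fact m)) *
  (Cnorm (w (m + n)%nat) * Cnorm (rho_seq r1 r2 r3 n)) * Rabs z ^ (m + p).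
Proof.
  unfold Fterm. rewrite !Cnorm_mul, Cnorm_pow, Cnorm_Ci, pow1, !Cnorm_RtoC, Cnorm_conj, RPow_abs.
  rewrite (Rabs_pos_eq (/ _)). ring.
  left. apply Rinv_0_lt_compat. pose proof (INR_fact_ge1 (n - p)); pose proof (INR_fact_ge1 p);
  pose proof (INR_fact_ge1 m). apply Rmult_lt_0_compat; [apply Rmult_lt_0_compat|]; lra.
Qed.

Lemma Fterm_le_m w r1 r2 r3 z m n p :
  Cnorm (Fterm w r1 r2 r3 z m n p) <=
  / INR (fact m) * (Cnorm (w (m + n)%nat) * Cnorm (rho_seq r1 r2 r3 n)) * Rabs z ^ (m + p).
Proof.
  rewrite Fterm_norm. pose proof (INR_fact_ge1 (n - p)); pose proof (INR_fact_ge1 p);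
  pose proof (INR_fact_ge1 m).
  assert (0 <= Cnorm (w (m + n)%nat) * Cnorm (rho_seq r1 r2 r3 n) * Rabs z ^ (m + p)).
  { apply Rmult_le_pos. apply Rmult_le_pos; apply Cnorm_ge0. apply pow_le, Rabs_pos. }
  set (Q := Cnorm (w (m + n)%nat) * Cnorm (rho_seq r1 r2 r3 n) * Rabs z ^ (m + p)) in *.
  replace (/ (INR (fact (n - p)) * INR (fact p) * INR (fact m)) *
    (Cnorm (w (m + n)%nat) * Cnorm (rho_seq r1 r2 r3 n)) * Rabs z ^ (m + p)) with
    (/ (INR (fact (n - p)) * INR (fact p) * INR (fact m)) * Q) by (unfold Q; ring).
  replace (/ INR (fact m) * (Cnorm (w (m + n)%nat) * Cnorm (rho_seq r1 r2 r3 n)) * Rabs z ^ (m + p))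
    with (/ INR (fact m) * Q) by (unfold Q; ring).
  apply Rmult_le_compat_r; auto.
  apply Rinv_le_contravar. lra.
  rewrite <- (Rmult_1_l (INR (fact m))) at 1. apply Rmult_le_compat_r. lra.
  rewrite <- (Rmult_1_l 1). apply Rmult_le_compat; lra.
Qed.

Lemma Fterm_le1 w r1 r2 r3 z m n p :
  Cnorm (Fterm w r1 r2 r3 z m n p) <=
  Cnorm (w (m + n)%nat) * Cnorm (rho_seq r1 r2 r3 n) * Rabs z ^ (m + p).
Proof.
  eapply Rle_trans. apply Fterm_le_m.
  assert (0 <= Cnorm (w (m + n)%nat) * Cnorm (rho_seq r1 r2 r3 n) * Rabs z ^ (m + p)).
  { apply Rmult_le_pos. apply Rmult_le_pos; apply Cnorm_ge0. apply pow_le, Rabs_pos. }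
  pose proof (INR_fact_ge1 m).
  set (Q := Cnorm (w (m + n)%nat) * Cnorm (rho_seq r1 r2 r3 n) * Rabs z ^ (m + p)) in *.
  replace (/ INR (fact m) * (Cnorm (w (m + n)%nat) * Cnorm (rho_seq r1 r2 r3 n)) * Rabs z ^ (m + p))
    with (/ INR (fact m) * Q) by (unfold Q; ring).
  rewrite <- (Rmult_1_l Q) at 2. apply Rmult_le_compat_r; auto.
  rewrite <- Rinv_1. apply Rinv_le_contravar; lra.
Qed.

Lemma pow_le1 s e : 0 <= s <= 1 -> s ^ e <= 1.
Proof. intros H. rewrite <- (pow1 e). apply pow_incr. lra. Qed.

Lemma powC_le C j : 0 <= C -> (j <= 5)%nat -> C ^ j <= (1 + C) ^ 5.
Proof. intros HC Hj. apply Rle_trans with ((1 + C) ^ j).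
  apply pow_incr; lra. apply Rle_pow. lra. auto. Qed.

Lemma term_bound (s C z : R) (a n j : nat) (Wn Pn cW cP : R) :
  0 < s <= 1 -> 0 < C -> Rabs z <= C * s ^ 4 -> 0 <= Wn -> Wn * s ^ a <= cW ->
  0 <= Pn <= cP * s ^ (2 * n) -> (j <= 5)%nat -> (8 + a <= 2 * n + 4 * j)%nat ->
  cW * cP <= 600 ->
  Wn * Pn * Rabs z ^ j <= 600 * (1 + C) ^ 5 * s ^ 8.
Proof.
  intros Hs HC Hz HW HWb [HP0 HP1] Hj He Hc.
  assert (Hzj : Rabs z ^ j <= C ^ j * s ^ (4 * j)).
  { rewrite pow_mult, <- Rpow_mult_distr. apply pow_incr. split. apply Rabs_pos. auto. }
  assert (HcP : 0 <= cP).
  { destruct (Rle_dec 0 cP); auto.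
    assert (0 < s ^ (2 * n)) by (apply pow_lt; lra). nra. }
  assert (Hsa : 0 < s ^ a) by (apply pow_lt; lra).
  assert (HcW : 0 <= cW) by nra.
  set (e := (2 * n + 4 * j - 8 - a)%nat).
  assert (Hsp : s ^ (2 * n) * s ^ (4 * j) = s ^ a * s ^ 8 * s ^ e).
  { rewrite <- !pow_add. f_equal. unfold e. lia. }
  assert (Hse : s ^ e <= 1) by (apply pow_le1; lra).
  assert (Hse0 : 0 <= s ^ e) by (apply pow_le; lra).
  assert (Hs8 : 0 <= s ^ 8) by (apply pow_le; lra).
  assert (HCj : C ^ j <= (1 + C) ^ 5) by (apply powC_le; [lra|auto]).
  assert (HCj0 : 0 <= C ^ j) by (apply pow_le; lra).
  assert (Hzj0 : 0 <= Rabs z ^ j) by (apply pow_le, Rabs_pos).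
  apply Rle_trans with (Wn * (cP * s ^ (2 * n)) * (C ^ j * s ^ (4 * j))).
  { apply Rmult_le_compat. apply Rmult_le_pos; auto. auto. apply Rmult_le_compat_l; auto. auto. }
  replace (Wn * (cP * s ^ (2 * n)) * (C ^ j * s ^ (4 * j))) with
    ((Wn * s ^ a) * cP * C ^ j * s ^ 8 * s ^ e)
    by (replace (Wn * (cP * s ^ (2 * n)) * (C ^ j * s ^ (4 * j))) with
          (Wn * cP * C ^ j * (s ^ (2 * n) * s ^ (4 * j))) by ring; rewrite Hsp; ring).
  apply Rle_trans with (cW * cP * C ^ j * s ^ 8 * 1).
  { apply Rmult_le_compat; try nra.
    apply Rmult_le_pos; [|auto]. apply Rmult_le_pos; [|auto]. apply Rmult_le_pos; nra.
    apply Rmult_le_compat_r; auto. apply Rmult_le_compat_r; auto. apply Rmult_le_compat_r; auto. }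
  rewrite Rmult_1_r.
  apply Rmult_le_compat_r; auto.
  apply Rle_trans with (600 * C ^ j). apply Rmult_le_compat_r; auto.
  apply Rmult_le_compat_l; lra.
Qed.

Lemma fact_ratio m n : (n <= 3)%nat ->
  INR (fact (m + n)) <= INR (fact m) * ((INR m + 1) * (INR m + 2) * (INR m + 3)).
Proof.
  intros Hn. apply Rle_trans with (INR (fact (m + 3))).
  apply le_INR, fact_le; lia.
  replace (m + 3)%nat with (S (S (S m))) by lia. rewrite !fact_simpl.
  rewrite !mult_INR, !S_INR. nra.
Qed.

Lemma tail_term (s C z : R) w r1 r2 r3 m n p :
  0 < s <= 1 -> 0 < C -> Rabs z <= C * s ^ 4 ->
  Cnorm (rho_seq r1 r2 r3 n) <= 5 * s ^ (2 * n) ->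
  (forall k, (2 <= k)%nat -> Cnorm (w k) <= INR (fact k) / s ^ k) ->
  (3 <= m)%nat -> (n <= 3)%nat -> (p <= 3)%nat ->
  Cnorm (Fterm w r1 r2 r3 z m n p) <=
  5 * (1 + C) ^ 3 * ((INR m + 1) * (INR m + 2) * (INR m + 3)) * (C * s ^ 3) ^ m.
Proof.
  intros Hs HC Hz Hrho Hw Hm Hn Hp.
  eapply Rle_trans. apply Fterm_le_m.
  set (Pm := (INR m + 1) * (INR m + 2) * (INR m + 3)).
  set (Fm := INR (fact m)). set (F := INR (fact (m + n))).
  assert (HFm : 1 <= Fm) by apply INR_fact_ge1.
  assert (HF : F <= Fm * Pm) by (apply fact_ratio; auto).
  assert (HF0 : 0 <= F) by (apply pos_INR).
  assert (HX : 0 < s ^ (m + n)) by (apply pow_lt; lra).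
  assert (HW : Cnorm (w (m + n)%nat) <= F / s ^ (m + n)) by (apply Hw; lia).
  assert (Hzp : Rabs z ^ (m + p) <= C ^ m * s ^ (4 * m) * (1 + C) ^ 3).
  { apply Rle_trans with ((C * s ^ 4) ^ (m + p)).
    apply pow_incr; split; [apply Rabs_pos|auto].
    rewrite pow_add, Rpow_mult_distr, <- pow_mult, (Nat.mul_comm 4 m).
    apply Rmult_le_compat_l. apply Rmult_le_pos; apply pow_le; lra.
    apply Rle_trans with ((1 + C) ^ p). apply pow_incr. split. apply Rmult_le_pos. lra. apply pow_le; lra.
    assert (s ^ 4 <= 1) by (apply pow_le1; lra). nra.
    apply Rle_pow; [lra|auto]. }
  assert (Hsplit : s ^ (2 * n) * s ^ (4 * m) = s ^ (m + n) * s ^ (3 * m) * s ^ n).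
  { rewrite <- !pow_add. f_equal. lia. }
  assert (Hsn : s ^ n <= 1) by (apply pow_le1; lra).
  assert (Hsn0 : 0 <= s ^ n) by (apply pow_le; lra).
  assert (H3m : 0 <= s ^ (3 * m)) by (apply pow_le; lra).
  assert (HCm : 0 <= C ^ m) by (apply pow_le; lra).
  assert (HA : 0 <= (1 + C) ^ 3) by (apply pow_le; lra).
  pose proof (Cnorm_ge0 (w (m + n)%nat)). pose proof (Cnorm_ge0 (rho_seq r1 r2 r3 n)).
  assert (Hzp0 : 0 <= Rabs z ^ (m + p)) by (apply pow_le, Rabs_pos).
  apply Rle_trans with (/ Fm * (F / s ^ (m + n) * (5 * s ^ (2 * n))) * (C ^ m * s ^ (4 * m) * (1 + C) ^ 3)).
  { apply Rmult_le_compat; auto.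
    apply Rmult_le_pos. left; apply Rinv_0_lt_compat; lra. apply Rmult_le_pos; auto.
    apply Rmult_le_compat_l. left; apply Rinv_0_lt_compat; lra.
    apply Rmult_le_compat; auto. }
  replace (/ Fm * (F / s ^ (m + n) * (5 * s ^ (2 * n))) * (C ^ m * s ^ (4 * m) * (1 + C) ^ 3))
    with ((F / Fm) * 5 * (1 + C) ^ 3 * C ^ m * ((s ^ (2 * n) * s ^ (4 * m)) / s ^ (m + n)))
    by (field; lra).
  rewrite Hsplit.
  replace (s ^ (m + n) * s ^ (3 * m) * s ^ n / s ^ (m + n)) with (s ^ (3 * m) * s ^ n) by (field; lra).
  rewrite Rpow_mult_distr, <- pow_mult, (Nat.mul_comm 3 m).
  assert (HFF : F / Fm <= Pm).
  { apply (Rmult_le_reg_l Fm). lra. unfold Rdiv. rewrite <- Rmult_assoc, (Rmult_comm Fm F), Rmult_assoc, Rinv_r, Rmult_1_r; lra. }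
  assert (HFF0 : 0 <= F / Fm) by (apply Rmult_le_pos; [auto|left; apply Rinv_0_lt_compat; lra]).
  rewrite (Nat.mul_comm 3 m) in H3m.
  apply Rle_trans with (Pm * 5 * (1 + C) ^ 3 * C ^ m * (s ^ (m * 3) * 1)).
  { apply Rmult_le_compat.
    - apply Rmult_le_pos; [apply Rmult_le_pos; [apply Rmult_le_pos|]|]; lra.
    - apply Rmult_le_pos; lra.
    - apply Rmult_le_compat_r; [lra|]. apply Rmult_le_compat_r; [lra|]. apply Rmult_le_compat_r; lra.
    - apply Rmult_le_compat_l; lra. }
  right. ring.
Qed.

Definition Pm (m : nat) := (INR m + 1) * (INR m + 2) * (INR m + 3).

Lemma bm_decay q : 0 <= q <= 1/2 -> forall k,
  Pm (k + 3) * q ^ (k + 3) <= Pm 3 * q ^ 3 * (7/8) ^ k.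
Proof.
  intros Hq. induction k.
  - simpl. lra.
  - replace (S k + 3)%nat with (S (k + 3)) by lia.
    unfold Pm in *. rewrite S_INR. simpl pow at 1. simpl pow at 2.
    set (m := INR (k + 3)) in *.
    assert (Hm : 3 <= m) by (unfold m; replace 3 with (INR 3) by (simpl; ring); apply le_INR; lia).
    assert (H0 : 0 <= q ^ (k + 3)) by (apply pow_le; lra).
    apply Rle_trans with (7/8 * ((m + 1) * (m + 2) * (m + 3) * q ^ (k + 3))).
    + assert ((m + 1 + 1) * (m + 1 + 2) * (m + 1 + 3) * q <= 7/8 * ((m + 1) * (m + 2) * (m + 3))).
      { assert (HQ : 0 <= (m + 2) * (m + 3)) by nra.
        assert (Hr : (m + 4) * q <= 7/8 * (m + 1)) by nra.
        replace ((m + 1 + 1) * (m + 1 + 2) * (m + 1 + 3) * q) with (((m + 2) * (m + 3)) * ((m + 4) * q)) by ring.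
        replace (7 / 8 * ((m + 1) * (m + 2) * (m + 3))) with (((m + 2) * (m + 3)) * (7/8 * (m + 1))) by ring.
        apply Rmult_le_compat_l; auto. }
      replace ((m + 1 + 1) * (m + 1 + 2) * (m + 1 + 3) * (q * q ^ (k + 3))) with
        (((m + 1 + 1) * (m + 1 + 2) * (m + 1 + 3) * q) * q ^ (k + 3)) by ring.
      rewrite <- Rmult_assoc. apply Rmult_le_compat_r; auto.
    + replace ((7/8)^(S k)) with (7/8 * (7/8)^k) by (simpl; ring). lra.
Qed.

Lemma rho_seq_bound r1 r2 r3 s n :
  0 < s <= 1 -> Cnorm r1 <= s ^ 2 -> Cnorm r2 <= 2 * s ^ 4 -> Cnorm r3 <= 5 * s ^ 6 -> (n <= 3)%nat ->
  Cnorm (rho_seq r1 r2 r3 n) <= 5 * s ^ (2 * n).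
Proof.
  intros Hs H1 H2 H3 Hn. destruct n as [|[|[|[|n]]]]; simpl rho_seq; try lia.
  - rewrite Cnorm_Cone. simpl. lra.
  - simpl (2 * 1)%nat. assert (0 <= s ^ 2) by (apply pow_le; lra). lra.
  - simpl (2 * 2)%nat. assert (0 <= s ^ 4) by (apply pow_le; lra). lra.
  - simpl (2 * 3)%nat. lra.
Qed.

Lemma Finner_abs_tail (s C z : R) w r1 r2 r3 :
  0 < s <= 1 -> 0 < C -> C * s ^ 3 <= 1/2 -> Rabs z <= C * s ^ 4 ->
  Cnorm r1 <= s ^ 2 -> Cnorm r2 <= 2 * s ^ 4 -> Cnorm r3 <= 5 * s ^ 6 ->
  (forall k, (2 <= k)%nat -> Cnorm (w k) <= INR (fact k) / s ^ k) ->
  forall k, Finner_abs w r1 r2 r3 z (k + 3) <= 6000 * (1 + C) ^ 6 * s ^ 8 * (7/8) ^ k.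
Proof.
  intros Hs HC Hq Hz H1 H2 H3 Hw k.
  set (T := 5 * (1 + C) ^ 3 * ((INR (k + 3) + 1) * (INR (k + 3) + 2) * (INR (k + 3) + 3)) * (C * s ^ 3) ^ (k + 3)).
  assert (HT : forall n p, (n <= 3)%nat -> (p <= 3)%nat -> Cnorm (Fterm w r1 r2 r3 z (k + 3) n p) <= T).
  { intros n p Hn Hp. apply tail_term; auto. apply rho_seq_bound; auto. lia. }
  assert (Hsum : Finner_abs w r1 r2 r3 z (k + 3) <= 10 * T).
  { unfold Finner_abs. simpl sum_f_R0.
    pose proof (HT 0 0 ltac:(lia) ltac:(lia))%nat.
    pose proof (HT 1 0 ltac:(lia) ltac:(lia))%nat. pose proof (HT 1 1 ltac:(lia) ltac:(lia))%nat.
    pose proof (HT 2 0 ltac:(lia) ltac:(lia))%nat. pose proof (HT 2 1 ltac:(lia) ltac:(lia))%nat.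
    pose proof (HT 2 2 ltac:(lia) ltac:(lia))%nat.
    pose proof (HT 3 0 ltac:(lia) ltac:(lia))%nat. pose proof (HT 3 1 ltac:(lia) ltac:(lia))%nat.
    pose proof (HT 3 2 ltac:(lia) ltac:(lia))%nat. pose proof (HT 3 3 ltac:(lia) ltac:(lia))%nat.
    lra. }
  eapply Rle_trans; [exact Hsum|].
  assert (Hq0 : 0 <= C * s ^ 3 <= 1/2).
  { split; auto. apply Rmult_le_pos. lra. apply pow_le; lra. }
  pose proof (bm_decay _ Hq0 k) as Hb. unfold Pm in Hb.
  assert (HA : 0 <= (1 + C) ^ 3) by (apply pow_le; lra).
  assert (Hb3 : (C * s ^ 3) ^ 3 <= (1 + C) ^ 3 * s ^ 8).
  { rewrite Rpow_mult_distr, <- pow_mult. simpl (3 * 3)%nat.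
    apply Rmult_le_compat. apply pow_le; lra. apply pow_le; lra. apply pow_incr; lra.
    replace 9%nat with (8 + 1)%nat by lia. rewrite pow_add.
    rewrite <- (Rmult_1_r (s ^ 8)) at 2. apply Rmult_le_compat_l. apply pow_le; lra.
    simpl; lra. }
  assert (H78 : 0 <= (7/8) ^ k) by (apply pow_le; lra).
  unfold T. simpl (INR 3) in Hb.
  replace (INR 3) with 3 in Hb by (simpl; ring).
  replace (6000 * (1 + C) ^ 6 * s ^ 8 * (7 / 8) ^ k) with
    (50 * (1 + C) ^ 3 * (120 * ((1 + C) ^ 3 * s ^ 8) * (7 / 8) ^ k)) by ring.
  replace (10 * (5 * (1 + C) ^ 3 * ((INR (k + 3) + 1) * (INR (k + 3) + 2) * (INR (k + 3) + 3)) * (C * s ^ 3) ^ (k + 3)))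
    with (50 * (1 + C) ^ 3 * (((INR (k + 3) + 1) * (INR (k + 3) + 2) * (INR (k + 3) + 3)) * (C * s ^ 3) ^ (k + 3))) by ring.
  apply Rmult_le_compat_l. lra.
  eapply Rle_trans. exact Hb.
  apply Rmult_le_compat_r; auto.
  assert (0 <= (C * s ^ 3) ^ 3) by (apply pow_le; lra). nra.
Qed.

Lemma Fmain_id w r1 r2 r3 z :
  Fmain w r1 r2 r3 z =
  Cadd (Cadd (Fterm w r1 r2 r3 z 1 1 0)
             (Cadd (Cadd (Fterm w r1 r2 r3 z 0 2 1) (Fterm w r1 r2 r3 z 1 2 0)) (Fterm w r1 r2 r3 z 1 3 0)))
       (Fterm w r1 r2 r3 z 2 0 0).
Proof.
  unfold Fmain, Fterm. simpl rho_seq. simpl Nat.add. simpl Nat.sub. simpl fact. simpl INR.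
  apply Cx_eq; unfold Cadd, Cmul, Csub, Copp, Cpow, Cone, Ci, Cconj, RtoC; simpl; field.
Qed.

Lemma Fterm0_re w r1 r2 r3 m n p : (1 <= m + p)%nat -> re (Fterm w r1 r2 r3 0 m n p) = 0.
Proof. intros H. unfold Fterm. rewrite pow_i by lia. simpl. ring. Qed.
Lemma Fterm0_im w r1 r2 r3 m n p : (1 <= m + p)%nat -> im (Fterm w r1 r2 r3 0 m n p) = 0.
Proof. intros H. unfold Fterm. rewrite pow_i by lia. simpl. ring. Qed.
Lemma Fterm_z0 w r1 r2 r3 z n : Fterm w r1 r2 r3 z 0 n 0 = Fterm w r1 r2 r3 0 0 n 0.
Proof. reflexivity. Qed.


Local Open Scope nat_scope.
Definition remlist : list (nat * nat * nat) :=
  (0,1,1) :: (0,2,2) :: (0,3,1) :: (0,3,2) :: (0,3,3) ::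
  (1,0,0) :: (1,1,1) :: (1,2,1) :: (1,2,2) :: (1,3,1) :: (1,3,2) :: (1,3,3) ::
  (2,1,0) :: (2,1,1) :: (2,2,0) :: (2,2,1) :: (2,2,2) :: (2,3,0) :: (2,3,1) :: (2,3,2) :: (2,3,3) :: nil.
Local Open Scope R_scope.

Definition Finn (T : nat -> nat -> nat -> Cx) m := Csum_upto (fun n => Csum_upto (fun p => T m n p) n) 3.

Lemma abs_bound_M x M : Rabs x <= M -> - M <= x <= M.
Proof. intros H. pose proof (Rle_abs x). pose proof (Rle_abs (- x)). rewrite Rabs_Ropp in H1. lra. Qed.

Lemma finite_decomp (T T0 : nat -> nat -> nat -> Cx) M :
  (forall n, T0 0%nat n 0%nat = T 0%nat n 0%nat) ->
  (forall m n p, (1 <= m + p)%nat -> T0 m n p = Czero) ->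
  (forall m n p, In (m, n, p) remlist -> Cnorm (T m n p) <= M) ->
  Cnorm (Csub (Csub (Cadd (Cadd (Finn T 0) (Finn T 1)) (Finn T 2)) (Finn T0 0))
     (Cadd (Cadd (T 1 1 0)%nat (Cadd (Cadd (T 0 2 1)%nat (T 1 2 0)%nat) (T 1 3 0)%nat)) (T 2 0 0)%nat))
  <= 2 * (21 * M).
Proof.
  intros H0 Hz HM.
  unfold Finn. simpl Csum_upto.
  rewrite !H0. rewrite !(Hz 0%nat _ (S _)) by lia.
  assert (Hr : forall m n p, In (m, n, p) remlist -> - M <= re (T m n p) <= M /\ - M <= im (T m n p) <= M).
  { intros m n p Hin. pose proof (HM m n p Hin). split; apply abs_bound_M; eapply Rle_trans;
    [apply re_le| exact H | apply im_le | exact H]. }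
  assert (L := fun m n p H => proj1 (Hr m n p H)). assert (I := fun m n p H => proj2 (Hr m n p H)).
  unfold remlist in L, I; simpl In in L, I.
  pose proof (L 0 1 1 ltac:(tauto))%nat. pose proof (L 0 2 2 ltac:(tauto))%nat.
  pose proof (L 0 3 1 ltac:(tauto))%nat. pose proof (L 0 3 2 ltac:(tauto))%nat.
  pose proof (L 0 3 3 ltac:(tauto))%nat. pose proof (L 1 0 0 ltac:(tauto))%nat.
  pose proof (L 1 1 1 ltac:(tauto))%nat. pose proof (L 1 2 1 ltac:(tauto))%nat.
  pose proof (L 1 2 2 ltac:(tauto))%nat. pose proof (L 1 3 1 ltac:(tauto))%nat.
  pose proof (L 1 3 2 ltac:(tauto))%nat. pose proof (L 1 3 3 ltac:(tauto))%nat.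
  pose proof (L 2 1 0 ltac:(tauto))%nat. pose proof (L 2 1 1 ltac:(tauto))%nat.
  pose proof (L 2 2 0 ltac:(tauto))%nat. pose proof (L 2 2 1 ltac:(tauto))%nat.
  pose proof (L 2 2 2 ltac:(tauto))%nat. pose proof (L 2 3 0 ltac:(tauto))%nat.
  pose proof (L 2 3 1 ltac:(tauto))%nat. pose proof (L 2 3 2 ltac:(tauto))%nat.
  pose proof (L 2 3 3 ltac:(tauto))%nat.
  pose proof (I 0 1 1 ltac:(tauto))%nat. pose proof (I 0 2 2 ltac:(tauto))%nat.
  pose proof (I 0 3 1 ltac:(tauto))%nat. pose proof (I 0 3 2 ltac:(tauto))%nat.
  pose proof (I 0 3 3 ltac:(tauto))%nat. pose proof (I 1 0 0 ltac:(tauto))%nat.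
  pose proof (I 1 1 1 ltac:(tauto))%nat. pose proof (I 1 2 1 ltac:(tauto))%nat.
  pose proof (I 1 2 2 ltac:(tauto))%nat. pose proof (I 1 3 1 ltac:(tauto))%nat.
  pose proof (I 1 3 2 ltac:(tauto))%nat. pose proof (I 1 3 3 ltac:(tauto))%nat.
  pose proof (I 2 1 0 ltac:(tauto))%nat. pose proof (I 2 1 1 ltac:(tauto))%nat.
  pose proof (I 2 2 0 ltac:(tauto))%nat. pose proof (I 2 2 1 ltac:(tauto))%nat.
  pose proof (I 2 2 2 ltac:(tauto))%nat. pose proof (I 2 3 0 ltac:(tauto))%nat.
  pose proof (I 2 3 1 ltac:(tauto))%nat. pose proof (I 2 3 2 ltac:(tauto))%nat.
  pose proof (I 2 3 3 ltac:(tauto))%nat.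
  eapply Rle_trans. apply Cnorm_le_reim.
  replace (2 * (21 * M)) with (21 * M + 21 * M) by ring.
  apply Rplus_le_compat; apply Rabs_le; simpl; split; lra.
Qed.

Ltac gen_tac a cW :=
  eapply Rle_trans; [apply Fterm_le1|]; simpl Nat.add;
  eapply (term_bound _ _ _ a _ _ _ _ cW 5);
  [ assumption | assumption | assumption | apply Cnorm_ge0 | assumption
  | split; [apply Cnorm_ge0| apply rho_seq_bound; auto] | simpl; lia | simpl; lia | lra ].

Lemma rem_bound (s C z : R) w r1 r2 r3 :
  0 < s <= 1 -> 0 < C -> Rabs z <= C * s ^ 4 ->
  Cnorm r1 <= s ^ 2 -> Cnorm r2 <= 2 * s ^ 4 -> Cnorm r3 <= 5 * s ^ 6 ->
  w 1%nat = Czero ->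
  Cnorm (w 2%nat) * s ^ 2 <= 2 -> Cnorm (w 3%nat) * s ^ 2 <= 6 ->
  Cnorm (w 4%nat) * s ^ 4 <= 24 -> Cnorm (w 5%nat) * s ^ 4 <= 120 ->
  forall m n p, In (m, n, p) remlist ->
  Cnorm (Fterm w r1 r2 r3 z m n p) <= 600 * (1 + C) ^ 5 * s ^ 8.
Proof.
  intros Hs HC Hz H1 H2 H3 Hw1 HW2 HW3 HW4 HW5 m n p Hin.
  assert (Hpos : 0 <= 600 * (1 + C) ^ 5 * s ^ 8).
  { apply Rmult_le_pos. apply Rmult_le_pos. lra. apply pow_le; lra. apply pow_le; lra. }
  unfold remlist in Hin; simpl In in Hin.
  repeat (destruct Hin as [Hin|Hin]; [injection Hin as <- <- <-|]); try contradiction;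
  first
  [ eapply Rle_trans; [apply Fterm_le1|]; simpl Nat.add; rewrite Hw1, Cnorm_Czero;
    rewrite !Rmult_0_l; exact Hpos
  | gen_tac 2%nat 2 | gen_tac 2%nat 6 | gen_tac 4%nat 24 | gen_tac 4%nat 120 ].
Qed.

Lemma Csum_norm (f : nat -> Cx) N : Cnorm (Csum_upto f N) <= sum_f_R0 (fun i => Cnorm (f i)) N.
Proof. induction N; simpl. lra. eapply Rle_trans. apply Cnorm_add. lra. Qed.

Lemma Finner_norm w r1 r2 r3 z m : Cnorm (Finner w r1 r2 r3 z m) <= Finner_abs w r1 r2 r3 z m.
Proof.
  unfold Finner, Finner_abs. eapply Rle_trans. apply Csum_norm.
  apply sum_Rle. intros n _. apply Csum_norm.
Qed.

Lemma Finner_abs_ge0 w r1 r2 r3 z m : 0 <= Finner_abs w r1 r2 r3 z m.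
Proof. eapply Rle_trans. apply Cnorm_ge0. apply Finner_norm. Qed.

Lemma Finner0_zero w r1 r2 r3 k : Cnorm (Finner w r1 r2 r3 0 (S k)) = 0.
Proof.
  apply Rle_antisym; [|apply Cnorm_ge0].
  eapply Rle_trans. apply Finner_norm. unfold Finner_abs.
  assert (H : forall n p, Cnorm (Fterm w r1 r2 r3 0 (S k) n p) <= 0).
  { intros n p. eapply Rle_trans. apply Fterm_le1. rewrite Rabs_R0. simpl Nat.add. simpl pow. lra. }
  simpl sum_f_R0.
  pose proof (H 0 0)%nat. pose proof (H 1 0)%nat. pose proof (H 1 1)%nat.
  pose proof (H 2 0)%nat. pose proof (H 2 1)%nat. pose proof (H 2 2)%nat.
  pose proof (H 3 0)%nat. pose proof (H 3 1)%nat. pose proof (H 3 2)%nat. pose proof (H 3 3)%nat.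
  lra.
Qed.

Lemma const_sum (a : nat -> R) : (forall k, a (S k) = 0) -> infinite_sum a (a 0%nat).
Proof.
  intros H eps He. exists 0%nat. intros n _.
  assert (sum_f_R0 a n = a 0%nat). { induction n; simpl; auto. rewrite IHn, H. ring. }
  rewrite H0. unfold Rdist. rewrite Rminus_diag, Rabs_R0. lra.
Qed.

Lemma series_main (s C z : R) w r1 r2 r3 :
  0 < s <= 1 -> 0 < C -> C * s ^ 3 <= 1/2 -> Rabs z <= C * s ^ 4 ->
  Cnorm r1 <= s ^ 2 -> Cnorm r2 <= 2 * s ^ 4 -> Cnorm r3 <= 5 * s ^ 6 ->
  w 1%nat = Czero ->
  Cnorm (w 2%nat) * s ^ 2 <= 2 -> Cnorm (w 3%nat) * s ^ 2 <= 6 ->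
  Cnorm (w 4%nat) * s ^ 4 <= 24 -> Cnorm (w 5%nat) * s ^ 4 <= 120 ->
  (forall k, (2 <= k)%nat -> Cnorm (w k) <= INR (fact k) / s ^ k) ->
  (exists l, infinite_sum (Finner_abs w r1 r2 r3 z) l) /\
  exists Fz F0 : Cx,
    Cinfinite_sum (Finner w r1 r2 r3 z) Fz /\
    Cinfinite_sum (Finner w r1 r2 r3 0) F0 /\
    Cnorm (Csub (Csub Fz F0) (Fmain w r1 r2 r3 z)) <=
      (4 * 21 * 600 * (1 + C) ^ 5 + 16 * 6000 * (1 + C) ^ 6) * s ^ 8.
Proof.
  intros Hs HC Hq Hz H1 H2 H3 Hw1 HW2 HW3 HW4 HW5 Hw.
  set (c := 6000 * (1 + C) ^ 6 * s ^ 8).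
  set (B := Finner_abs w r1 r2 r3 z).
  assert (Hc0 : 0 <= c) by (unfold c; apply Rmult_le_pos; [apply Rmult_le_pos; [lra|apply pow_le; lra]|apply pow_le; lra]).
  assert (Hr : 0 <= 7/8 < 1) by lra.
  assert (HB : forall k, B (k + 3)%nat <= c * (7/8) ^ k).
  { intro k. unfold B, c. apply Finner_abs_tail; auto. }
  assert (HB0 : forall m, 0 <= B m) by (intro; apply Finner_abs_ge0).
  assert (H1r : forall N, c / (1 - 7/8) * (1 - (7/8) ^ N) <= 8 * c).
  { intro N. assert (0 <= (7/8) ^ N) by (apply pow_le; lra).
    replace (c / (1 - 7 / 8)) with (8 * c) by field. nra. }
  assert (HBs : forall N, sum_f_R0 B (N + 2) <= sum_f_R0 B 2 + 8 * c).
  { intro N. pose proof (partial_B B c (7/8) Hr HB N). pose proof (H1r N). lra. }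
  split.
  { apply (cv_nonneg B (sum_f_R0 B 2 + 8 * c)); auto. }
  set (are := fun m => re (Finner w r1 r2 r3 z m)).
  set (aim := fun m => im (Finner w r1 r2 r3 z m)).
  assert (Hare : forall m, Rabs (are m) <= B m).
  { intro m. unfold are, B. eapply Rle_trans. apply re_le. apply Finner_norm. }
  assert (Haim : forall m, Rabs (aim m) <= B m).
  { intro m. unfold aim, B. eapply Rle_trans. apply im_le. apply Finner_norm. }
  destruct (cv_dom are B _ Hare HBs) as [lre Hlre].
  destruct (cv_dom aim B _ Haim HBs) as [lim Hlim].
  exists (mkC lre lim), (Finner w r1 r2 r3 0 0).
  split; [split; simpl; assumption|].
  split.
  { split; apply const_sum; intro k; pose proof (Finner0_zero w r1 r2 r3 k).
    - pose proof (re_le (Finner w r1 r2 r3 0 (S k))).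
      assert (Hx : Rabs (re (Finner w r1 r2 r3 0 (S k))) <= 0) by lra. apply abs_bound_M in Hx. lra.
    - pose proof (im_le (Finner w r1 r2 r3 0 (S k))).
      assert (Hx : Rabs (im (Finner w r1 r2 r3 0 (S k))) <= 0) by lra. apply abs_bound_M in Hx. lra. }
  assert (Tre : Rabs (lre - sum_f_R0 are 2) <= 8 * c).
  { apply (lim_bound (sum_f_R0 are)); auto. intro N.
    eapply Rle_trans. apply (partial_a are B c (7/8)); auto. apply H1r. }
  assert (Tim : Rabs (lim - sum_f_R0 aim 2) <= 8 * c).
  { apply (lim_bound (sum_f_R0 aim)); auto. intro N.
    eapply Rle_trans. apply (partial_a aim B c (7/8)); auto. apply H1r. }
  set (M := 600 * (1 + C) ^ 5 * s ^ 8).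
  assert (HD2 := finite_decomp (Fterm w r1 r2 r3 z) (Fterm w r1 r2 r3 0) M
     (fun n => eq_sym (Fterm_z0 w r1 r2 r3 z n))).
  assert (HD : Cnorm (Csub (Csub (Cadd (Cadd (Finner w r1 r2 r3 z 0) (Finner w r1 r2 r3 z 1)) (Finner w r1 r2 r3 z 2))
                     (Finner w r1 r2 r3 0 0)) (Fmain w r1 r2 r3 z)) <= 2 * (21 * M)).
  { rewrite Fmain_id. apply HD2.
    - intros m n p Hmp. apply Cx_eq; [apply Fterm0_re|apply Fterm0_im]; auto.
    - intros m n p Hin. unfold M. apply (rem_bound s C z w r1 r2 r3); auto. }
  set (D2 := Csub (Csub (Cadd (Cadd (Finner w r1 r2 r3 z 0) (Finner w r1 r2 r3 z 1)) (Finner w r1 r2 r3 z 2))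
                     (Finner w r1 r2 r3 0 0)) (Fmain w r1 r2 r3 z)) in HD.
  pose proof (re_le D2). pose proof (im_le D2).
  eapply Rle_trans. apply Cnorm_le_reim.
  assert (Ere : re (Csub (Csub (mkC lre lim) (Finner w r1 r2 r3 0 0)) (Fmain w r1 r2 r3 z)) =
                re D2 + (lre - sum_f_R0 are 2)).
  { unfold D2, are. simpl. ring. }
  assert (Eim : im (Csub (Csub (mkC lre lim) (Finner w r1 r2 r3 0 0)) (Fmain w r1 r2 r3 z)) =
                im D2 + (lim - sum_f_R0 aim 2)).
  { unfold D2, aim. simpl. ring. }
  rewrite Ere, Eim.
  assert (Rabs (re D2 + (lre - sum_f_R0 are 2)) <= Rabs (re D2) + Rabs (lre - sum_f_R0 are 2)) by apply Rabs_triang.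
  assert (Rabs (im D2 + (lim - sum_f_R0 aim 2)) <= Rabs (im D2) + Rabs (lim - sum_f_R0 aim 2)) by apply Rabs_triang.
  unfold M, c in *. lra.
Qed.

Lemma div_mult_le x F y : 0 < y -> x <= F / y -> x * y <= F.
Proof. intros Hy H. apply (Rmult_le_compat_r y) in H; [|lra]. unfold Rdiv in H.
  rewrite Rmult_assoc, Rinv_l, Rmult_1_r in H by lra. exact H. Qed.

Theorem theorem4 :
  forall Cc : R, 0 < Cc ->
  exists K : R,
  forall (delta t : R) (x x1 x2 x3 : R -> Cx) (e1 e2 : R -> Cx)
         (g1 g2 g3 : R -> Cx) (w : nat -> Cx) (z : R),
    0 < delta <= 1 ->
    (* x_+ is Cx^3 and nonvanishing near t *)
    (exists r, 0 < r /\ forall s, Rabs (s - t) < r ->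
       x s <> Czero /\ Cderiv_at x x1 s /\ Cderiv_at x1 x2 s /\
       Cderiv_at x2 x3 s /\ Ccont_at x3 s) ->
    0 < omega x x1 t ->
    (* eta' and eta'' *)
    (exists r, 0 < r /\ forall s, Rabs (s - t) < r -> Cderiv_at (eta x x1) e1 s) ->
    Cderiv_at e1 e2 t ->
    (* tau-derivatives of x_+(t+tau) e^{-i omega(t) tau} *)
    (exists r, 0 < r /\ forall tau, Rabs tau < r ->
       Cderiv_at (loc_sig x x1 t) g1 tau /\ Cderiv_at g1 g2 tau) ->
    Cderiv_at g2 g3 0 ->
    (* stability conditions *)
    Rabs (upsilon x x1 t / omega x x1 t) <= delta ->
    Cnorm (e1 t) / omega x x1 t ^ 2 <= delta ^ 2 ->
    Cnorm (e2 t) / omega x x1 t ^ 3 <= delta ^ 3 ->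
    (* wavelet suitability *)
    w 0%nat = Cone -> w 1%nat = Czero ->
    (forall k, (2 <= k)%nat -> Nat.Even k ->
       Cnorm (w k) <= INR (fact k) / (sqrt delta ^ k)) ->
    (forall k, (3 <= k)%nat -> Nat.Odd k ->
       Cnorm (w k) <= INR (fact k) / (sqrt delta ^ (k - 1))) ->
    Cc * (delta * sqrt delta) <= 1/2 ->
    Rabs z <= Cc * delta ^ 2 ->
    let r1 := rho_of x x1 t 1 (g1 0) in
    let r2 := rho_of x x1 t 2 (g2 0) in
    let r3 := rho_of x x1 t 3 (g3 0) in
    (exists l, infinite_sum (Finner_abs w r1 r2 r3 z) l) /\
    exists Fz F0 : Cx,
      Cinfinite_sum (Finner w r1 r2 r3 z) Fz /\
      Cinfinite_sum (Finner w r1 r2 r3 0) F0 /\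
      Cnorm (Csub (Csub Fz F0) (Fmain w r1 r2 r3 z)) <= K * delta ^ 4.
Proof.
  intros Cc HCc.
  exists (4 * 21 * 600 * (1 + Cc) ^ 5 + 16 * 6000 * (1 + Cc) ^ 6).
  intros delta t x x1 x2 x3 e1 e2 g1 g2 g3 w z Hd Hx Hw Heta He2 Hg Hg3 Hv He1b He2b
    Hw0 Hw1 Heven Hodd Hq Hz r1 r2 r3.
  destruct (derivs t x x1 x2 x3 e1 e2 g1 g2 g3 Hx Heta He2 Hg Hg3)
    as [Hxt [Q0 [Q1 [Q2 [Q3 [Q4 Q5]]]]]].
  destruct (rho_ids t x x1 x2 x3 e1 e2 g1 g2 g3 Hw Hxt Q0 Q1 Q2 Q3 Q4 Q5) as [R1 [R2 R3]].
  destruct (rho_bounds (omega x x1 t) (upsilon x x1 t) delta (e1 t) (e2 t) Hw (proj1 Hd) Hv He1b He2b)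
    as [B1 [B2 B3]].
  rewrite <- R1 in B1. rewrite <- R2 in B2. rewrite <- R3 in B3.
  fold r1 in B1. fold r2 in B2. fold r3 in B3.
  set (s := sqrt delta) in *.
  assert (Hs0 : 0 < s) by (apply sqrt_lt_R0; lra).
  assert (Hds : delta = s ^ 2) by (unfold s; simpl; rewrite Rmult_1_r, sqrt_sqrt; lra).
  assert (Hs1 : s <= 1) by (destruct (Rle_dec s 1); auto; nra).
  assert (Hs : 0 < s <= 1) by lra.
  assert (HW : forall k, (2 <= k)%nat -> Cnorm (w k) <= INR (fact k) / s ^ k).
  { intros k Hk. destruct (Nat.Even_or_Odd k) as [He|Ho].
    - apply Heven; auto.
    - assert (Hk3 : (3 <= k)%nat).
      { destruct Ho as [j ->]. lia. }
      eapply Rle_trans. apply Hodd; auto.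
      assert (Hf : 0 <= INR (fact k)) by apply pos_INR.
      assert (Hsk : 0 < s ^ k) by (apply pow_lt; lra).
      assert (Hsk1 : 0 < s ^ (k - 1)) by (apply pow_lt; lra).
      assert (Hle : s ^ k <= s ^ (k - 1)).
      { replace k with (S (k - 1)) at 1 by lia. simpl. rewrite <- (Rmult_1_l (s ^ (k - 1))) at 2.
        apply Rmult_le_compat_r; lra. }
      unfold Rdiv. apply Rmult_le_compat_l; auto. apply Rinv_le_contravar; auto. }
  rewrite Hds. replace ((s ^ 2) ^ 4) with (s ^ 8) by ring.
  apply (series_main s Cc z w r1 r2 r3 Hs HCc).
  - rewrite Hds in Hq. replace (Cc * s ^ 3) with (Cc * (s ^ 2 * s)) by ring. exact Hq.
  - rewrite Hds in Hz. replace (Cc * s ^ 4) with (Cc * (s ^ 2) ^ 2) by ring. exact Hz.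
  - rewrite <- Hds. exact B1.
  - replace (2 * s ^ 4) with (2 * delta ^ 2) by (rewrite Hds; ring). exact B2.
  - replace (5 * s ^ 6) with (5 * delta ^ 3) by (rewrite Hds; ring). exact B3.
  - exact Hw1.
  - apply div_mult_le. apply pow_lt; lra. pose proof (HW 2%nat ltac:(lia)). simpl (INR (fact 2)) in H. lra.
  - apply div_mult_le. apply pow_lt; lra.
    pose proof (Hodd 3%nat ltac:(lia) ltac:(exists 1%nat; reflexivity)). simpl (INR (fact 3)) in H.
    simpl (3 - 1)%nat in H. lra.
  - apply div_mult_le. apply pow_lt; lra. pose proof (HW 4%nat ltac:(lia)). simpl (INR (fact 4)) in H. lra.
  - apply div_mult_le. apply pow_lt; lra.
    pose proof (Hodd 5%nat ltac:(lia) ltac:(exists 2%nat; reflexivity)). simpl (INR (fact 5)) in H.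
    simpl (5 - 1)%nat in H. lra.
  - exact HW.
Qed.
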